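(* Let $Q\in\mathbb{R}^{n\times n}$ be symmetric positive definite, $A\in\mathbb{R}^{m\times n}$ with no zero rows, $b\in\mathbb{R}^m$, $c\in\mathbb{R}^n$, and suppose the problem $P(Q,A,b,c)$: $\min_{x\in\mathbb{R}^n}\frac12 x^\intercal Qx+c^\intercal x$ s.t. $Ax\preceq b$ is feasible, with optimal solution $x^\ast$. Let $\mu^\ast$ be an optimal solution of the dual problem $\max_{\mu\succeq 0} g(\mu)$, where $g(\mu)=-\frac12(A^\intercal\mu+c)^\intercal Q^{-1}(A^\intercal\mu+c)-\mu^\intercal b$, and let $t:=\operatorname{sign}(\mu^\ast+\nabla g(\mu^\ast))\in\{+1,-1,0\}^m$ (componentwise), where $\nabla g(\mu)=-AQ^{-1}(A^\intercal\mu+c)-b$. Suppose an adversary (the target node) knows $A$, $Q$, $x^\ast$ and $t$. Then $c$ cannot be uniquely retrieved by the adversary — i.e., there exist $c'\in\mathbb{R}^n$ with $c'\neq c$, $b'\in\mathbb{R}^m$, and an optimal solution $\mu'$ of the dual of $P(Q,A,b',c')$ (dual function $g'$ defined as $g$ with $b',c'$ in place of $b,c$) such that $x^\ast$ is the optimal solution of $P(Q,A,b',c')$ and $\operatorname{sign}(\mu'+\nabla g'(\mu'))=t$ — if and only if $t_i>0$ for some $i\in\{1,\dots,m\}$.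
   Context: Vector inequalities $\preceq,\succeq$ are element-wise. The paper's notion of non-unique retrieval: a private input cannot be uniquely retrieved by an adversary if there are at least two values of it, each consistent (together with some values of the other data unknown to the adversary) with everything the adversary knows; the claim makes this explicit for the knowledge $(A,Q,x^\ast,t)$. *)

(* Defs.v *)
From HB Require Import structures.
From mathcomp Require Import all_boot all_order all_algebra.
From mathcomp Require Import reals.
Set Implicit Arguments. Unset Strict Implicit. Unset Printing Implicit Defensive.
Import Order.TTheory GRing.Theory Num.Theory.
Local Open Scope ring_scope.

Section QP.
Variables (R : realType) (n m : nat).
Implicit Types (Q : 'M[R]_n) (A : 'M[R]_(m, n)) (b mu nu : 'cV[R]_m)
  (c x y : 'cV[R]_n).

Definition symmetric_mx Q : Prop := Q^T = Q.
Definition posdef_mx Q : Prop :=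
  forall x : 'cV[R]_n, x != 0 -> 0 < (x^T *m Q *m x) ord0 ord0.
Definition no_zero_rows A : Prop := forall i : 'I_m, row i A != 0.

Definition qp_obj Q c x : R :=
  2^-1 * (x^T *m Q *m x) ord0 ord0 + (c^T *m x) ord0 ord0.
Definition qp_feasible A b x : Prop := forall i : 'I_m, (A *m x) i ord0 <= b i ord0.
Definition qp_optimal Q A b c x : Prop :=
  qp_feasible A b x /\ forall y, qp_feasible A b y -> qp_obj Q c x <= qp_obj Q c y.
Definition qp_is_feasible A b : Prop := exists x, qp_feasible A b x.

Definition dual_fun Q A b c mu : R :=
  - (2^-1 * ((A^T *m mu + c)^T *m invmx Q *m (A^T *m mu + c)) ord0 ord0)
  - (mu^T *m b) ord0 ord0.
Definition dual_grad Q A b c mu : 'cV[R]_m :=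
  - (A *m invmx Q *m (A^T *m mu + c)) - b.
Definition nonneg_vec (v : 'cV[R]_m) : Prop := forall i : 'I_m, 0 <= v i ord0.
Definition dual_optimal Q A b c mu : Prop :=
  nonneg_vec mu /\ forall nu, nonneg_vec nu -> dual_fun Q A b c nu <= dual_fun Q A b c mu.

Definition sign_vec (v : 'cV[R]_m) : 'cV[R]_m := map_mx Num.sg v.

Definition sign_pattern Q A b c mu : 'cV[R]_m :=
  sign_vec (mu + dual_grad Q A b c mu).
End QP.

(* Main.v *)
Require Import Defs.
From HB Require Import structures.
From mathcomp Require Import all_boot all_order all_algebra.
From mathcomp Require Import reals.
From mathcomp Require Import ring lra.
Import Order.TTheory GRing.Theory Num.Theory.
Local Open Scope ring_scope.
Set Implicit Arguments. Unset Strict Implicit.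

Lemma tr11 (R : ringType) (M : 'M[R]_1) : M^T 0 0 = M 0 0.
Proof. by rewrite mxE. Qed.

Lemma unitQ (R : realType) n (Q : 'M[R]_n) : posdef_mx Q -> Q \in unitmx.
Proof.
move=> pQ; rewrite unitmxE unitfE; apply/negP => /det0P [v nv vQ].
have : v^T != 0 by apply: contra nv => /eqP h; rewrite -(trmxK v) h trmx0.
move/pQ; rewrite trmxK vQ mul0mx mxE ltxx //.
Qed.

Lemma addE (R : ringType) p q (M N : 'M[R]_(p,q)) i j : (M + N) i j = M i j + N i j.
Proof. by rewrite mxE. Qed.
Lemma oppE (R : ringType) p q (M : 'M[R]_(p,q)) i j : (- M) i j = - M i j.
Proof. by rewrite mxE. Qed.

Lemma dual_expand (R : realType) n m (Q : 'M[R]_n) (A : 'M[R]_(m,n)) b c mu v :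
  (invmx Q)^T = invmx Q ->
  dual_fun Q A b c (mu + v) = dual_fun Q A b c mu + (v^T *m dual_grad Q A b c mu) 0 0
     - 2^-1 * ((A^T *m v)^T *m invmx Q *m (A^T *m v)) 0 0.
Proof.
move=> sP; rewrite /dual_fun /dual_grad.
have e1 : A^T *m (mu + v) + c = (A^T *m mu + c) + A^T *m v.
  by rewrite mulmxDr addrAC.
have e3 : v^T *m (A *m invmx Q *m (A^T *m mu + c)) = (A^T *m v)^T *m invmx Q *m (A^T *m mu + c).
  by rewrite !mulmxA trmx_mul trmxK.
rewrite e1 mulmxBr mulmxN e3.
move: (A^T *m mu + c) (A^T *m v) => u d.
have e2 : (d^T *m invmx Q *m u) 0 0 = (u^T *m invmx Q *m d) 0 0.
  by rewrite -tr11 !trmx_mul !trmxK sP mulmxA.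
rewrite !raddfD /= ?mulmxDl ?mulmxDr ?addE ?oppE ?mulmxDr ?addE e2.
rewrite -[(u^T *m _ *m d) 0 0]/((u^T *m invmx Q *m d) ord0 ord0) -[(v^T *m b) 0 0]/((v^T *m b) ord0 ord0) -[(d^T *m _ *m d) 0 0]/((d^T *m invmx Q *m d) ord0 ord0).
move: ((u^T *m invmx Q *m d) ord0 ord0) ((d^T *m invmx Q *m d) ord0 ord0) ((v^T *m b) ord0 ord0) ((mu^T *m b) ord0 ord0) ((u^T *m invmx Q *m u) ord0 ord0) => a1 a2 a3 a4 a5.
by field.
Qed.

Lemma primal_expand (R : realType) n (Q : 'M[R]_n) c x h :
  Q^T = Q ->
  qp_obj Q c (x + h) = qp_obj Q c x + ((Q *m x + c)^T *m h) 0 0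
     + 2^-1 * (h^T *m Q *m h) 0 0.
Proof.
move=> sQ; rewrite /qp_obj.
have e2 : (h^T *m Q *m x) 0 0 = (x^T *m Q *m h) 0 0.
  by rewrite -tr11 !trmx_mul !trmxK sQ mulmxA.
have e3 : (Q *m x)^T = x^T *m Q by rewrite trmx_mul sQ.
rewrite !raddfD /= e3 ?mulmxDl ?mulmxDr ?addE e2.
move: ((x^T *m Q *m h) 0 0) ((h^T *m Q *m h) 0 0) ((c^T *m h) 0 0) ((c^T *m x) 0 0) ((x^T *m Q *m x) 0 0) => a1 a2 a3 a4 a5.
by field.
Qed.

Lemma P_sym (R : realType) n (Q : 'M[R]_n) : symmetric_mx Q -> (invmx Q)^T = invmx Q.
Proof. by move=> sQ; rewrite trmx_inv sQ. Qed.

Lemma Q_psd (R : realType) n (Q : 'M[R]_n) : posdef_mx Q ->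
  forall h : 'cV[R]_n, 0 <= (h^T *m Q *m h) 0 0.
Proof.
move=> pQ h; have [->|nz] := eqVneq h 0.
  by rewrite mulmx0 mxE.
exact/ltW/pQ.
Qed.

Lemma P_psd (R : realType) n (Q : 'M[R]_n) : symmetric_mx Q -> posdef_mx Q ->
  forall z : 'cV[R]_n, 0 <= (z^T *m invmx Q *m z) 0 0.
Proof.
move=> sQ pQ z.
have -> : z^T *m invmx Q *m z = (invmx Q *m z)^T *m Q *m (invmx Q *m z).
  rewrite trmx_mul (P_sym sQ) -!mulmxA; congr (mulmx _ _).
  by rewrite [Q *m _]mulmxA mulmxV ?unitQ // mul1mx.
exact: Q_psd.
Qed.

Lemma real_kkt (R : realType) (a k w : R) : 0 <= a -> 0 <= k ->
  (forall s, - a <= s -> s * w - 2^-1 * (s * s * k) <= 0) -> w <= 0 /\ a * w = 0.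
Proof.
move=> a0 k0 H.
have wle : w <= 0.
  rewrite leNgt; apply/negP => w0.
  pose s := w / (k + 1).
  have hs : s * (k + 1) = w by rewrite /s mulfVK // gt_eqF // ltr_wpDl.
  have s0 : 0 < s by rewrite /s divr_gt0 // ltr_wpDl.
  have := H s; rewrite -hs.
  have -> : s * (s * (k + 1)) - 2^-1 * (s * s * k) = s * s * (2^-1 * k + 1) by field.
  have sa : - a <= s by apply: le_trans (ltW s0); rewrite oppr_le0.
  move=> /(_ sa).
  rewrite leNgt => /negP; apply; apply: mulr_gt0; first exact: mulr_gt0.
  by apply: ltr_wpDl => //; rewrite mulr_ge0 // invr_ge0.
split => //.
have [a0'|ap] := eqVneq a 0; first by rewrite a0' mul0r.
have apos : 0 < a by rewrite lt_def ap.
have [w0|wn] := eqVneq w 0; first by rewrite w0 mulr0.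
have wneg : w < 0 by rewrite lt_neqAle wn wle.
pose W := - w; pose D := W + a * k.
have Wp : 0 < W by rewrite /W oppr_gt0.
have Dp : 0 < D by rewrite /D ltr_wpDr // mulr_ge0.
pose s := - (a * W) / D.
have hs : s * D = - (a * W) by rewrite /s mulfVK // gt_eqF.
have sge : - a <= s.
  rewrite /s mulNr lerN2 ler_pdivrMr // ler_pM2l // /D lerDl mulr_ge0 //.
have := H s sge.
have e : D * D * (s * w - 2^-1 * (s * s * k)) = (s * D) * (w * D) - 2^-1 * ((s * D) * (s * D) * k) by ring.
have pos : 0 < D * D * (s * w - 2^-1 * (s * s * k)).
  rewrite e hs /D /W.
  have -> : - (a * - w) * (w * (- w + a * k)) - 2^-1 * (- (a * - w) * - (a * - w) * k)
     = a * W * W * (W + 2^-1 * (a * k)) by rewrite /W; field.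
  by rewrite !mulr_gt0 // ltr_wpDr // mulr_ge0 // ?invr_ge0 // mulr_ge0.
by rewrite leNgt -(pmulr_rgt0 _ (mulr_gt0 Dp Dp)) pos.
Qed.

Lemma delta_tr_mul (R : realType) m (j : 'I_m) (w : 'cV[R]_m) :
  ((delta_mx j (0 : 'I_1))^T *m w) 0 0 = w j ord0.
Proof. by rewrite trmx_delta -rowE mxE. Qed.

Lemma scale_bil (R : realType) p q (s : R) (v : 'cV[R]_p) (M : 'M[R]_(p,q)) (w : 'cV[R]_q) :
  ((s *: v)^T *m M *m (s *: w)) 0 0 = s * s * (v^T *m M *m w) 0 0.
Proof.
have -> : (s *: v)^T = s *: v^T by apply/matrixP => a b; rewrite !mxE.
by rewrite -scalemxAl -scalemxAl -scalemxAr !mxE mulrA.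
Qed.

Lemma scale_lin (R : realType) p (s : R) (v w : 'cV[R]_p) :
  ((s *: v)^T *m w) 0 0 = s * (v^T *m w) 0 0.
Proof.
have -> : (s *: v)^T = s *: v^T by apply/matrixP => a b; rewrite !mxE.
by rewrite -scalemxAl !mxE.
Qed.

Lemma dual_kkt (R : realType) n m (Q : 'M[R]_n) (A : 'M[R]_(m,n)) b c mu :
  symmetric_mx Q -> posdef_mx Q -> dual_optimal Q A b c mu ->
  forall j, dual_grad Q A b c mu j ord0 <= 0 /\ mu j ord0 * dual_grad Q A b c mu j ord0 = 0.
Proof.
move=> sQ pQ [mu0 opt] j.
set e : 'cV[R]_m := delta_mx j ord0.
set k := ((A^T *m e)^T *m invmx Q *m (A^T *m e)) 0 0.
apply: (@real_kkt _ _ k); [exact: mu0 | exact: (P_psd sQ pQ) |].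
move=> s hs.
have nn : nonneg_vec (mu + s *: e).
  move=> i; rewrite !mxE (_ : (ord0 == 0 :> 'I_1) = true) // andbT; have [->|ne] := eqVneq i j.
    rewrite mulr1; lra.
  by rewrite mulr0 addr0; exact: mu0.
have := opt _ nn; rewrite dual_expand ?P_sym // -subr_ge0.
rewrite scale_lin delta_tr_mul -scalemxAr scale_bil -/k.
lra.
Qed.

Lemma dual_opt_of_kkt (R : realType) n m (Q : 'M[R]_n) (A : 'M[R]_(m,n)) b c mu :
  symmetric_mx Q -> posdef_mx Q -> nonneg_vec mu ->
  (forall j, dual_grad Q A b c mu j ord0 <= 0 /\ mu j ord0 * dual_grad Q A b c mu j ord0 = 0) ->
  dual_optimal Q A b c mu.
Proof.
move=> sQ pQ mu0 kkt; split => // nu nu0.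
have -> : nu = mu + (nu - mu) by rewrite addrC subrK.
rewrite dual_expand ?P_sym //.
have h1 := P_psd sQ pQ (A^T *m (nu - mu)).
have h2 : ((nu - mu)^T *m dual_grad Q A b c mu) 0 0 <= 0.
  set w := dual_grad Q A b c mu in kkt *; clearbody w.
  rewrite mxE; apply: (big_ind (fun x => x <= 0)) => //; first by move=> x y; lra.
  move=> i _; rewrite [_^T _ _]mxE !addE !oppE; have [h3 h4] := kkt i; have := nu0 i.
  rewrite (_ : nu i ord0 - mu i ord0 = nu i ord0 - mu i ord0) //.
  by move=> h5; rewrite mulrBl h4 subr0 mulr_ge0_le0.
lra.
Qed.

Lemma primal_of_kkt (R : realType) n m (Q : 'M[R]_n) (A : 'M[R]_(m,n)) b c mu :
  symmetric_mx Q -> posdef_mx Q -> nonneg_vec mu ->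
  (forall j, dual_grad Q A b c mu j ord0 <= 0 /\ mu j ord0 * dual_grad Q A b c mu j ord0 = 0) ->
  let x := - (invmx Q *m (A^T *m mu + c)) in
  qp_feasible A b x /\
  forall y, qp_feasible A b y ->
    qp_obj Q c x + 2^-1 * ((y - x)^T *m Q *m (y - x)) 0 0 <= qp_obj Q c y.
Proof.
move=> sQ pQ mu0 kkt x.
have Ax : forall j, (A *m x) j ord0 = dual_grad Q A b c mu j ord0 + b j ord0.
  by move=> j; rewrite /dual_grad /x mulmxN mulmxA !mxE subrK.
split.
  by move=> j; rewrite Ax; have [h _] := kkt j; lra.
move=> y fy.
have -> : y = x + (y - x) by rewrite addrC subrK.
rewrite primal_expand // addrC (addrC x) addrK.
have -> : Q *m x + c = - (A^T *m mu).
  by rewrite /x mulmxN mulmxA mulmxV ?unitQ // mul1mx opprD subrK.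
have : 0 <= ((- (A^T *m mu))^T *m (y - x)) 0 0.
  have -> : (- (A^T *m mu))^T *m (y - x) = - (mu^T *m (A *m (y - x))).
    by rewrite raddfN /= mulNmx trmx_mul trmxK mulmxA.
  rewrite mxE oppr_ge0 mxE; apply: (big_ind (fun x => x <= 0)) => //; first by move=> ? ?; lra.
  move=> i _; rewrite [_^T _ _]mxE mulmxBr addE oppE.
  have [h3 h4] := kkt i; have hy := fy i; have ha := mu0 i; have hx := Ax i.
  have h4' : mu i 0 * dual_grad Q A b c mu i 0 = 0 := h4.
  have hy' : (A *m y) i 0 <= b i 0 := hy.
  have ha' : 0 <= mu i 0 := ha.
  have hx' : (A *m x) i 0 = dual_grad Q A b c mu i 0 + b i 0 := hx.
  rewrite hx'.
  have -> : mu i 0 * ((A *m y) i 0 - (dual_grad Q A b c mu i 0 + b i 0)) = mu i 0 * ((A *m y) i 0 - b i 0) - mu i 0 * dual_grad Q A b c mu i 0 by ring.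
  rewrite h4' subr0; apply: mulr_ge0_le0 => //; lra.
lra.
Qed.

Lemma qp_opt_of_kkt (R : realType) n m (Q : 'M[R]_n) (A : 'M[R]_(m,n)) b c mu :
  symmetric_mx Q -> posdef_mx Q -> nonneg_vec mu ->
  (forall j, dual_grad Q A b c mu j ord0 <= 0 /\ mu j ord0 * dual_grad Q A b c mu j ord0 = 0) ->
  qp_optimal Q A b c (- (invmx Q *m (A^T *m mu + c))).
Proof.
move=> sQ pQ mu0 kkt; have [fx H] := primal_of_kkt sQ pQ mu0 kkt; split => // y fy.
have := H y fy; have := Q_psd pQ (y - (- (invmx Q *m (A^T *m mu + c)))).
move: (qp_obj _ _ _) (qp_obj _ _ _) (_ 0 0) => u v k; lra.
Qed.

Lemma xstar_eq (R : realType) n m (Q : 'M[R]_n) (A : 'M[R]_(m,n)) b c mu x :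
  symmetric_mx Q -> posdef_mx Q -> qp_optimal Q A b c x -> dual_optimal Q A b c mu ->
  x = - (invmx Q *m (A^T *m mu + c)).
Proof.
move=> sQ pQ [fx xo] dopt.
have kkt := dual_kkt sQ pQ dopt.
have [fh H] := primal_of_kkt sQ pQ dopt.1 kkt.
set xh := - (invmx Q *m (A^T *m mu + c)) in fh H *.
have h1 := xo xh fh; have h2 := H x fx.
apply/eqP; rewrite -subr_eq0; apply/negPn/negP => nz.
have := pQ _ nz; lra.
Qed.

Lemma pos_sg (R : realType) (a w : R) : 0 <= a -> w <= 0 -> a * w = 0 ->
  (0 < Num.sg (a + w)) = (0 < a).
Proof.
move=> a0 w0 aw; rewrite sgr_gt0.
have [->|ap] := eqVneq a 0; first by rewrite add0r ltxx ltNge w0.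
have -> : w = 0 by move/eqP: aw; rewrite mulf_eq0 (negbTE ap) => /eqP.
by rewrite addr0.
Qed.

Lemma sp_entry (R : realType) n m (Q : 'M[R]_n) (A : 'M[R]_(m,n)) b c mu i :
  sign_pattern Q A b c mu i ord0 = Num.sg (mu i ord0 + dual_grad Q A b c mu i ord0).
Proof. by rewrite /sign_pattern /sign_vec mxE addE. Qed.

Unset Implicit Arguments.

Theorem proposition6 (R : realType) (n m : nat)
  (Q : 'M[R]_n) (A : 'M[R]_(m, n)) (b : 'cV[R]_m) (c : 'cV[R]_n)
  (xstar : 'cV[R]_n) (mustar : 'cV[R]_m) :
  symmetric_mx Q -> posdef_mx Q -> no_zero_rows A ->
  qp_is_feasible A b ->
  qp_optimal Q A b c xstar ->
  dual_optimal Q A b c mustar ->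
  let t := sign_pattern Q A b c mustar in
  (exists (c' : 'cV[R]_n) (b' : 'cV[R]_m) (mu' : 'cV[R]_m),
      c' != c /\ qp_optimal Q A b' c' xstar /\ dual_optimal Q A b' c' mu' /\
      sign_pattern Q A b' c' mu' = t)
  <-> (exists i : 'I_m, 0 < t i ord0).
Proof.
move=> sQ pQ nzA _ xopt dopt t.
have kkt := dual_kkt sQ pQ dopt.
have xe := xstar_eq sQ pQ xopt dopt.
have posE : forall i, (0 < t i ord0) = (0 < mustar i ord0).
  move=> i; rewrite /t sp_entry; have [h1 h2] := kkt i.
  exact: pos_sg (dopt.1 i) h1 h2.
split.
  move=> [c' [b' [mu' [ne [xopt' [dopt' tE]]]]]].
  case: (pickP (fun i => 0 < t i ord0)) => [i hi|none]; first by exists i.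
  exfalso; move/negP: ne; apply.
  have kkt' := dual_kkt sQ pQ dopt'.
  have xe' := xstar_eq sQ pQ xopt' dopt'.
  have z0 : mustar = 0.
    apply/matrixP => i j; rewrite (ord1 j) mxE.
    have := none i; rewrite /= posE => /negbT; rewrite -leNgt => h.
    by apply/eqP; rewrite eq_le h (dopt.1 i).
  have z1 : mu' = 0.
    apply/matrixP => i j; rewrite (ord1 j) mxE.
    have := none i; rewrite /= -tE sp_entry; have [h1 h2] := kkt' i.
    rewrite (pos_sg (dopt'.1 i) h1 h2) => /negbT; rewrite -leNgt => h.
    by apply/eqP; rewrite eq_le h (dopt'.1 i).
  move: xe xe'; rewrite z0 z1 !mulmx0 !add0r => -> /eqP.
  rewrite eqr_opp => /eqP h.
  have : Q *m (invmx Q *m c') = Q *m (invmx Q *m c) by rewrite h.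
  by rewrite !mulmxA mulmxV ?unitQ // !mul1mx => ->.
move=> [i hi]; rewrite posE in hi.
set e : 'cV[R]_m := delta_mx i ord0.
have eD : e = delta_mx i ord0 by [].
clearbody e.
have [gi0 gi1] := kkt i.
have wi : dual_grad Q A b c mustar i ord0 = 0.
  by move/eqP: gi1; rewrite mulf_eq0 (gt_eqF hi) => /eqP.
exists (c - A^T *m e), b, (mustar + e).
have key : A^T *m (mustar + e) + (c - A^T *m e) = A^T *m mustar + c.
  by rewrite mulmxDr addrACA subrr addr0.
have ge : dual_grad Q A b (c - A^T *m e) (mustar + e) = dual_grad Q A b c mustar.
  by rewrite /dual_grad key.
have eE : forall j, e j ord0 = (j == i)%:R.
  by move=> j; rewrite eD mxE andbT.
have nn : nonneg_vec (mustar + e).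
  move=> j; rewrite [(mustar + e) _ _]addE eE; apply: addr_ge0; first exact: dopt.1.
  by rewrite ler0n.
have kkt' : forall j, dual_grad Q A b (c - A^T *m e) (mustar + e) j ord0 <= 0 /\
    (mustar + e) j ord0 * dual_grad Q A b (c - A^T *m e) (mustar + e) j ord0 = 0.
  move=> j; rewrite ge [(mustar + e) _ _]addE eE; have [h1 h2] := kkt j; split => //.
  have [->|ne] := eqVneq j i; first by rewrite wi mulr0.
  by rewrite mulr0n addr0.
split.
  rewrite -subr_eq0 addrAC subrr add0r oppr_eq0; apply/eqP => h.
  have := nzA i; rewrite rowE -trmx_eq0 trmx_mul trmx_delta.
  by rewrite -eD h eqxx.
split.
  rewrite xe -key; exact: qp_opt_of_kkt sQ pQ nn kkt'.
split; first exact: dual_opt_of_kkt sQ pQ nn kkt'.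
apply/matrixP => j k; rewrite (ord1 k) !sp_entry ge [(mustar + e) _ _]addE eE.
have [->|ne] := eqVneq j i; last by rewrite addr0.
by rewrite wi !addr0 !gtr0_sg // ltr_wpDr.
Qed.
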